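(* Let $1\le d<n$, let $I_1\subseteq I(d,n)$ be the set of rows containing $n$, and let $\underline j:=(n-d)(n-d+1)\cdots(n-2)\,n$. (i) $\underline j$ is the minimal element of $\mathfrak C_{\mathrm{left}}\cap I_1$. (ii) If $\underline i\in I(d,n)$ satisfies $\ell(\underline i)\ge\ell(\underline j)$, then $\underline i\in I_1$.
   Context: $I(d,n)$: $d$-subsets of $\{1,\dots,n\}$ as increasing sequences $i_1\cdots i_d$, ordered by $\underline i\le\underline j$ iff $i_k\le j_k$ for all $k$; $\ell(\underline i)=\sum_h(i_h-h)$. $\mathfrak C_{\mathrm{left}}$ is the maximal chain largest in the lexicographic order of concatenated strings $\underline i_r\cdots\underline i_0$; explicitly it is obtained from $(n-d+1)\cdots n$ by lowering successively the first, second, ..., $d$-th entries by one, then again the first, second, ..., and so on until reaching $12\cdots d$. *)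

(* Defs.v *)
From mathcomp Require Import all_boot.
Set Implicit Arguments. Unset Strict Implicit. Unset Printing Implicit Defensive.

Definition inI (d n : nat) (s : seq nat) : bool :=
  [&& size s == d, sorted ltn s & all (fun x => (0 < x) && (x <= n)) s].

Definition leI (s t : seq nat) : bool := all2 leq s t.

Definition ell (s : seq nat) : nat := \sum_(h < size s) (nth 0 s h - h.+1).

Definition lower (p : nat) (s : seq nat) : seq nat :=
  set_nth 0 s p (nth 0 s p).-1.

(* m-th element of the chain C_left: start at (n-d+1)...n and at step m
   lower entry number (m mod d) (0-based), i.e. first, second, ..., d-th,
   then again first, second, ... *)
Fixpoint cleft_elem (d n m : nat) : seq nat :=
  match m with
  | 0 => [seq n - d + h.+1 | h <- iota 0 d]
  | m'.+1 => lower (m' %% d) (cleft_elem d n m')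
  end.

(* C_left: the d(n-d)+1 elements, ending at 12...d *)
Definition Cleft (d n : nat) : seq (seq nat) :=
  [seq cleft_elem d n m | m <- iota 0 (d * (n - d)).+1].

Definition inI1 (d n : nat) (s : seq nat) : bool := inI d n s && (n \in s).

Definition jrow (d n : nat) : seq nat := rcons [seq n - d + h | h <- iota 0 d.-1] n.

(* Main.v *)
Require Import Defs.
From mathcomp Require Import all_boot.
From mathcomp Require Import zify.

Lemma size_cleft d n m : 0 < d -> size (cleft_elem d n m) = d.
Proof.
move=> d0; elim: m => [|m IH] /=; first by rewrite size_map size_iota.
rewrite /lower size_set_nth IH; apply/maxn_idPr; exact: ltn_pmod.
Qed.

Lemma nth_cleft_small d n m i : m <= d -> i < d ->
  nth 0 (cleft_elem d n m) i = n - d + i + (m <= i).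
Proof.
elim: m i => [|m IH] i hm hi /=.
  rewrite (nth_map 0) ?size_iota // nth_iota //; lia.
rewrite /lower modn_small // nth_set_nth /=.
case: eqP => [->|hne]; rewrite IH ?leqnn //; try lia.
all: try by rewrite ltnn leqnn /=; lia.
all: case: (ltngtP m i) => h; try lia.
all: try by rewrite ltnW.
all: by rewrite leqNgt h.
Qed.

Lemma nth_lower_le p s i : nth 0 (lower p s) i <= nth 0 s i.
Proof.
rewrite /lower nth_set_nth /=; case: eqP => [->|_] //; exact: leq_pred.
Qed.

Lemma cleft_mono d n m m' i : m <= m' ->
  nth 0 (cleft_elem d n m') i <= nth 0 (cleft_elem d n m) i.
Proof.
elim: m' => [|m' IH] h; first by rewrite leqn0 in h; rewrite (eqP h).
case: (leqP m m') => h'.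
  exact: leq_trans (nth_lower_le _ _ _) (IH h').
by have -> : m = m'.+1 by lia.
Qed.

Lemma sorted_bound (s : seq nat) B k : sorted ltn s -> all (fun x => x <= B) s ->
  k < size s -> nth 0 s k + (size s - k) <= B + 1.
Proof.
elim: s k => [|x t IH] k //= hs /andP[hx ht] hk.
have hst : sorted ltn t := path_sorted hs.
case: k hk => [|k] hk /=.
  case: t hs hst ht IH {hk} => [|y t'] hs hst ht IH /=; first lia.
  move: hs => /= /andP[hxy _].
  have := IH 0 hst ht isT => /=; lia.
have := IH k hst ht; lia.
Qed.

Lemma all2_nth (s t : seq nat) : size s = size t ->
  (forall i, i < size s -> nth 0 s i <= nth 0 t i) -> all2 leq s t.
Proof.
elim: s t => [|x s IH] [|y t] //= [hst] h.
rewrite (h 0 isT) /=; apply: IH => // i hi; exact: (h i.+1).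
Qed.

Lemma nth_jrow d n i : 0 < d -> i < d ->
  nth 0 (jrow d n) i = if i < d.-1 then n - d + i else n.
Proof.
move=> d0 hi; rewrite /jrow nth_rcons size_map size_iota.
case: ltnP => h.
  by rewrite (nth_map 0) ?size_iota // nth_iota.
by have -> : i == d.-1 by apply/eqP; lia.
Qed.

Lemma size_jrow d n : 0 < d -> size (jrow d n) = d.
Proof. by move=> d0; rewrite /jrow size_rcons size_map size_iota; lia. Qed.

Theorem lemma2p28 (d n : nat) (hd1 : 1 <= d) (hdn : d < n) :
  (* (i) jrow is the minimal element of C_left ∩ I_1 *)
  ((jrow d n \in Cleft d n) && inI1 d n (jrow d n) /\
   (forall s, s \in Cleft d n -> inI1 d n s -> leI (jrow d n) s)) /\
  (* (ii) *)
  (forall s, inI d n s -> ell (jrow d n) <= ell s -> inI1 d n s).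
Proof.
have hj : jrow d n = cleft_elem d n d.-1.
  apply: (@eq_from_nth _ 0); first by rewrite size_jrow // size_cleft.
  move=> i; rewrite size_jrow // => hi.
  rewrite nth_jrow // nth_cleft_small //; try lia.
  by case: ltnP; case: leqP => /=; lia.
split; [split|].
- apply/andP; split.
    rewrite hj; apply/mapP; exists d.-1 => //; rewrite mem_iota; nia.
  rewrite /inI1 /inI size_jrow // eqxx /=.
  apply/andP; split; last by rewrite /jrow mem_rcons inE eqxx.
  apply/andP; split.
    apply/(sortedP 0) => i; rewrite size_jrow // => hi.
    rewrite !nth_jrow //; try lia.
    case: (ltnP i d.-1) => h1; case: (ltnP i.+1 d.-1) => h2 /=; try lia.
  apply/(all_nthP 0) => i; rewrite size_jrow // => hi.
  by rewrite nth_jrow //; case: (ltnP i d.-1) => h /=; lia.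
- move=> s /mapP[m _ ->] /andP[/and3P[/eqP hsz hsort hall] hn].
  case: (ltnP m d) => hm.
    apply: all2_nth; first by rewrite size_jrow // size_cleft.
    move=> i; rewrite size_jrow // => hi.
    rewrite nth_jrow // nth_cleft_small //; try lia.
    by case: ltnP; case: leqP => /=; lia.
  exfalso.
  move: hn => /(nthP 0)[i hi hni].
  have hb := @sorted_bound _ n i hsort.
  have : all (fun x => x <= n) (cleft_elem d n m).
    by apply: sub_all hall => x /andP[].
  move=> /hb /(_ hi); rewrite hni hsz => hb'.
  rewrite hsz in hi.
  have hi' : i = d.-1 by lia.
  have := @cleft_mono d n d m i hm; rewrite hni (@nth_cleft_small d n d) //.
  case: leqP => /=; lia.
- move=> s hs; rewrite /inI1 hs /=; apply: contraTT => hn.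
  move: hs => /and3P[/eqP hsz hsort hall].
  have hall' : all (fun x => x <= n.-1) s.
    apply/allP => x hx; move/allP: hall => /(_ x hx) /andP[_ hxn].
    have : x != n by apply: contraNneq hn => <-.
    lia.
  have hb i : i < d -> nth 0 s i - i.+1 <= n - d - 1.
    move=> hi; have := @sorted_bound s n.-1 i hsort hall'; rewrite hsz => /(_ hi); lia.
  have h1 : ell s <= d * (n - d - 1).
    rewrite /ell hsz; have : \sum_(h < d) (nth 0 s h - h.+1) <= \sum_(h < d) (n - d - 1) by apply: leq_sum => i _; exact: hb.
    by rewrite sum_nat_const card_ord.
  have h2 : ell (jrow d n) = d.-1 * (n - d - 1) + (n - d).
    rewrite /ell size_jrow //.
    case: d hd1 hdn hj {hb h1 hsz} => [|d'] // _ hdn _.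
    rewrite big_ord_recr /= nth_jrow // ltnn /=.
    rewrite (eq_bigr (fun _ => n - d'.+1 - 1)) ?sum_nat_const ?card_ord //.
    move=> i _; rewrite nth_jrow ?(leqW (ltn_ord i)) //= (ltn_ord i); lia.
  rewrite -ltnNge h2; apply: leq_ltn_trans h1 _.
  case: d hd1 {hb hsz hj h2} hdn => [|d'] // _ hdn /=; nia.
Qed.
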